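(* Let $X$ be a projective irreducible symplectic variety with Beauville--Bogomolov--Fujiki form $q$ integral on $L:=H^2(X,\mathbb Z)$, and let $E$ be a prime exceptional divisor on $X$. Assume that (a) the linear form $-\frac{2q(E,\cdot)}{q(E)}$ on $L$ takes integer values (i.e. the class $-2E^\vee/q(E)$ is integral), and (b) either $E$ or $E/2$ is a primitive element of $L$. Then $|q(E)|\le 4\,\mathrm{Card}(A_X)$. In particular this holds for every prime exceptional divisor on a projective irreducible symplectic manifold $X$.
   Context: A (possibly singular) irreducible symplectic variety is a normal compact K\''ahler variety with canonical singularities and a symplectic reflexive $2$-form $\sigma$ such that for every quasi-\'etale $f:X'\to X$, $f^{[*]}\sigma$ generates the algebra of reflexive forms on $X'$; in the smooth case this is a simply connected compact K\''ahler manifold with $H^0(\Omega^2)=\mathbb C\sigma$, $\sigma$ symplectic. $q$ is the Beauville--Bogomolov--Fujiki form, scaled to be integral (non-degenerate) on $L=H^2(X,\mathbb Z)$; $A_X:=L^\vee/L$, with $L\hookrightarrow L^\vee$, $t\mapsto q(t,\cdot)$, is the finite discriminant group. A prime exceptional divisor is a prime divisor $E$ with $q(E)<0$. For smooth projective $X$, hypotheses (a) and (b) are known (Druel, Markman). *)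

(* Defs.v *)
(* The lattice-theoretic core of the statement:
   L = H^2(X,Z) is modelled as Z^n = 'rV[int]_n with the (integral,
   symmetric, non-degenerate) BBF form given by its Gram matrix Q. *)
From HB Require Import structures.
From mathcomp Require Import all_boot all_order all_algebra.
Set Implicit Arguments. Unset Strict Implicit. Unset Printing Implicit Defensive.
Import Order.TTheory GRing.Theory Num.Theory.
Local Open Scope ring_scope.

Definition bform (n : nat) (Q : 'M[int]_n) (x y : 'rV[int]_n) : int :=
  (x *m Q *m y^T) 0 0.

Definition sym_nondeg (n : nat) (Q : 'M[int]_n) : Prop :=
  Q^T = Q /\ forall x : 'rV[int]_n, (forall y, bform Q x y = 0) -> x = 0.

Definition primitive (n : nat) (v : 'rV[int]_n) : Prop :=
  v != 0 /\ forall (k : int) (w : 'rV[int]_n), v = k *: w -> k = 1 \/ k = -1.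

(* L^vee = Hom(L,Z) is identified with 'rV[int]_n via the dual basis;
   the embedding L -> L^vee, t |-> q(t,.) is t |-> t *m Q.
   [discr_card Q m] : the discriminant group A_X = L^vee / L has exactly
   m elements (witnessed by a surjection onto 'I_m whose fibres are
   exactly the cosets of L in L^vee). *)
Definition discr_card (n : nat) (Q : 'M[int]_n) (m : nat) : Prop :=
  exists f : 'rV[int]_n -> 'I_m,
    (forall i : 'I_m, exists y, f y = i) /\
    (forall y1 y2 : 'rV[int]_n, f y1 = f y2 <-> exists t, y1 - y2 = t *m Q).

(* Main.v *)
Require Import Defs.
From HB Require Import structures.
From mathcomp Require Import all_boot all_order all_algebra.
From mathcomp Require Import ring zify.
Import Order.TTheory GRing.Theory Num.Theory.
Local Open Scope ring_scope.

Lemma prim_div (n : nat) (v t : 'rV[int]_n) (c d : int) :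
  primitive v -> d != 0 -> c *: v = d *: t -> (d %| c)%Z.
Proof.
move=> [v0 pv] d0 e.
case: (Bezoutz c d) => u [w huw].
have g0 : gcdz c d != 0 by rewrite gcdz_eq0 negb_and d0 orbT.
have hd := divzK (dvdz_gcdr c d).
have : v = (d %/ gcdz c d)%Z *: (u *: t + w *: v).
  apply/matrixP => i j; apply: (mulIf g0); rewrite !mxE.
  have ev : c * v i j = d * t i j by move/matrixP: e => /(_ i j); rewrite !mxE.
  rewrite mulrAC hd -huw.
  have -> : v i j * (u * c + w * d) = u * (c * v i j) + w * d * v i j by ring.
  rewrite ev; ring.
move/pv => [h1|h1].
  by rewrite -hd h1 mul1r dvdz_gcdl.
by rewrite -hd h1 mulN1r dvdzE abszN -dvdzE dvdz_gcdl.
Qed.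

Arguments prim_div [n v t c d].

Theorem proposition4 (n : nat) (Q : 'M[int]_n) (m : nat) (E : 'rV[int]_n) :
  sym_nondeg Q ->
  discr_card Q m ->
  bform Q E E < 0 ->
  (forall x : 'rV[int]_n, (bform Q E E %| 2 * bform Q E x)%Z) ->
  (primitive E \/ exists e : 'rV[int]_n, E = 2%:Z *: e /\ primitive e) ->
  `|bform Q E E| <= 4 * m%:Z.
Proof.
move=> [_ nd] [f [fsurj ffib]] Dlt hdiv hprim.
set D := bform Q E E in Dlt hdiv *.
have D0 : D != 0 by rewrite ltr0_neq0.
pose w : 'rV[int]_n := \row_j ((2 * (E *m Q) ord0 j) %/ D)%Z.
have bd : forall j, bform Q E (delta_mx ord0 j) = (E *m Q) ord0 j.
  by move=> j; rewrite /bform trmx_delta -colE mxE.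
have hw : D *: w = 2 *: (E *m Q).
  have hdj : forall j, (D %| 2 * (E *m Q) ord0 j)%Z by move=> j; rewrite -bd.
  apply/matrixP => i j; rewrite [LHS]mxE [RHS]mxE [w _ _]mxE [i]ord1.
  by rewrite mulrC divzK.
have key : forall k : int, k != 0 -> (exists t, k *: w = t *m Q) ->
    (D %| 2 * k * 2)%Z.
  move=> k k0 [t ht].
  pose x := (2 * k) *: E - D *: t.
  have xQ : x *m Q = 0.
    rewrite /x mulmxBl -!scalemxAl -ht.
    by rewrite (scalerA D k) (mulrC D k) -(scalerA k D w) hw scalerA (mulrC k 2) subrr.
  have : x = 0.
    apply: nd => y; by rewrite /bform xQ mul0mx mxE.
  move/eqP; rewrite subr_eq0 => /eqP ex.
  case: hprim => [pE | [e [he pe]]].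
    exact: (dvdz_mulr 2 (prim_div pE D0 ex)).
  move: ex; rewrite he scalerA => ex2; exact: (prim_div pe D0 ex2).
pose J := ((`|D|%N + 3) %/ 4)%N.
pose g : 'I_J -> 'I_m := fun x => f ((x : nat)%:Z *: w).
have ginj : injective g.
  move=> x y gxy; apply/val_inj => /=; apply/eqP; apply/negPn/negP => nxy.
  have [t ht] := (ffib _ _).1 gxy.
  have k0 : (x : nat)%:Z - (y : nat)%:Z != 0.
    by rewrite subr_eq0 eqz_nat.
  have := key _ k0 (ex_intro _ t _).
  rewrite scalerBl ht => /(_ erefl).
  rewrite dvdzE !abszM => dv.
  have hx := ltn_ord x; have hy := ltn_ord y.
  have apos : (0 < `|(x : nat)%:Z - (y : nat)%:Z|%N)%N by rewrite absz_gt0.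
  have alt : (`|(x : nat)%:Z - (y : nat)%:Z|%N < J)%N.
    case: (leqP x y) => hxy; first by rewrite (distnEr hxy); exact: leq_ltn_trans (leq_subr x y) hy.
    by rewrite (distnEl (ltnW hxy)); exact: leq_ltn_trans (leq_subr y x) hx.
  move: dv apos alt; set a := `|(x : nat)%:Z - (y : nat)%:Z|%N => dv apos alt.
  have e2 : `|2%:Z|%N = 2%N by [].
  rewrite e2 in dv.
  have := dvdn_leq _ dv.
  have p : (0 < 2 * a * 2)%N by rewrite !muln_gt0 apos.
  move=> /(_ p) hle.
  have h4 : (a.+1 * 4 <= `|D|%N + 3)%N.
    move: alt; rewrite /J (@leq_divRL a.+1 (`|D|%N + 3) 4 isT); exact: id.
  clear -hle h4; lia.
have := leq_card g ginj; rewrite !card_ord => hJ.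
rewrite -abszE -[4]/(4%N%:Z) -PoszM lez_nat.
have := divn_eq (`|D|%N + 3) 4.
have := ltn_pmod (`|D|%N + 3) (isT : (0 < 4)%N).
rewrite -/J.
move: ((`|D|%N + 3) %% 4)%N => r hr hD.
clear -hr hD hJ; lia.
Qed.
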